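(* Let $M\ge3$, $\phi\in\mathrm{Hyp}^M$, $K\ge1$, $\mu\ge1$, and let $\tau_1,\tau_2$ be caps of side length $\mu^{1/2}K^{-1}$ with centers $z_1^c,z_2^c\in\Sigma$. Suppose that $$|t^1_{z_2^c}(z_1^c,z_2^c)|\ge 50\mu^{1/2}K^{-1}\quad\text{and}\quad |t^2_{z_2^c}(z_1^c,z_2^c)|\ge50\mu^{1/2}K^{-1}.$$ Then $$|\Gamma_z(z_1,z_2,z_1',z_2')|\ge 4\mu K^{-2}\qquad\text{for all } z_1,z_1'\in\tau_1,\ z,z_2,z_2'\in\tau_2.$$
   Context: $\Sigma:=[-1,1]^2$, $2\Sigma:=[-2,2]^2$. $\mathrm{Hyp}^M$ ($M\ge3$) is the set of $\phi\in C^M(\Sigma)$ extending to a $C^M$ function on $2\Sigma$ with $\phi(0)=0$, $\nabla\phi(0)=0$, $D^2\phi(0)=\begin{pmatrix}0&1\\1&0\end{pmatrix}$, and $\sup_{2\Sigma}|\partial_x^a\partial_y^b\phi|\le10^{-5}$ for $3\le a+b\le M$. A cap of side length $s$ with center $z^c$ is the closed axis-parallel square of side length $s$ centered at $z^c$, intersected with $\Sigma$. Set $H:=\phi_{xy}^2-\phi_{xx}\phi_{yy}$, $A:=\frac{\phi_{yy}}{\phi_{xy}+\sqrt H}$, $B:=\frac{\phi_{xx}}{\phi_{xy}+\sqrt H}$; $t^1_z(z_1,z_2):=\phi_x(z_2)-\phi_x(z_1)-B(z)(\phi_y(z_2)-\phi_y(z_1))$, $t^2_z(z_1,z_2):=\phi_y(z_2)-\phi_y(z_1)-A(z)(\phi_x(z_2)-\phi_x(z_1))$,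 and $\Gamma_z(z_1,z_2,z_1',z_2'):=\langle (D^2\phi(z))^{-1}(\nabla\phi(z_2)-\nabla\phi(z_1)),\nabla\phi(z_2')-\nabla\phi(z_1')\rangle$. *)

(* Defs.v *)
From Stdlib Require Import Reals Lra.
From Coquelicot Require Import Coquelicot.
Open Scope R_scope.

Definition pt := (R * R)%type.

Definition px (f : R -> R -> R) : R -> R -> R :=
  fun x y => Derive (fun t => f t y) x.
Definition py (f : R -> R -> R) : R -> R -> R :=
  fun x y => Derive (fun t => f x t) y.

Definition pd (a b : nat) (f : R -> R -> R) : R -> R -> R :=
  Nat.iter a px (Nat.iter b py f).

Definition in_open2Sigma (x y : R) : Prop := -2 < x < 2 /\ -2 < y < 2.

Fixpoint CkOn (k : nat) (f : R -> R -> R) : Prop :=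
  match k with
  | O => forall x y, in_open2Sigma x y ->
           continuous (fun p : R * R => f (fst p) (snd p)) (x, y)
  | S k' => (forall x y, in_open2Sigma x y ->
               continuous (fun p : R * R => f (fst p) (snd p)) (x, y)) /\
            (forall x y, in_open2Sigma x y ->
               ex_derive (fun t => f t y) x /\ ex_derive (fun t => f x t) y) /\
            CkOn k' (px f) /\ CkOn k' (py f)
  end.

Definition Hyp (M : nat) (phi : R -> R -> R) : Prop :=
  CkOn M phi /\
  phi 0 0 = 0 /\ pd 1 0 phi 0 0 = 0 /\ pd 0 1 phi 0 0 = 0 /\
  pd 2 0 phi 0 0 = 0 /\ pd 1 1 phi 0 0 = 1 /\ pd 0 2 phi 0 0 = 0 /\
  (forall a b : nat, (3 <= a + b)%nat -> (a + b <= M)%nat ->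
     forall x y, in_open2Sigma x y -> Rabs (pd a b phi x y) <= / 100000).

Definition inSigma (z : pt) : Prop :=
  -1 <= fst z <= 1 /\ -1 <= snd z <= 1.

Definition inCap (s : R) (zc z : pt) : Prop :=
  Rabs (fst z - fst zc) <= s / 2 /\ Rabs (snd z - snd zc) <= s / 2 /\ inSigma z.

Section Quant.
Variable phi : R -> R -> R.
Definition phx (z : pt) := pd 1 0 phi (fst z) (snd z).
Definition phy (z : pt) := pd 0 1 phi (fst z) (snd z).
Definition phxx (z : pt) := pd 2 0 phi (fst z) (snd z).
Definition phxy (z : pt) := pd 1 1 phi (fst z) (snd z).
Definition phyy (z : pt) := pd 0 2 phi (fst z) (snd z).

Definition Hq (z : pt) := phxy z ^ 2 - phxx z * phyy z.
Definition Aq (z : pt) := phyy z / (phxy z + sqrt (Hq z)).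
Definition Bq (z : pt) := phxx z / (phxy z + sqrt (Hq z)).

Definition t1 (z z1 z2 : pt) :=
  phx z2 - phx z1 - Bq z * (phy z2 - phy z1).
Definition t2 (z z1 z2 : pt) :=
  phy z2 - phy z1 - Aq z * (phx z2 - phx z1).

(* Gamma_z = < (D^2 phi(z))^{-1} (grad phi(z2) - grad phi(z1)),
               grad phi(z2') - grad phi(z1') >,
   with the inverse of the symmetric 2x2 Hessian [[p,q],[q,r]] written
   out as 1/(pr - q^2) [[r,-q],[-q,p]]. *)
Definition Gamma (z z1 z2 z1' z2' : pt) :=
  let p := phxx z in let q := phxy z in let r := phyy z in
  let d := p * r - q * q in
  let u1 := phx z2 - phx z1 in let u2 := phy z2 - phy z1 in
  let v1 := phx z2' - phx z1' in let v2 := phy z2' - phy z1' in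
  ((r * u1 - q * u2) / d) * v1 + ((- q * u1 + p * u2) / d) * v2.
End Quant.

(* Main.v *)
Require Import Defs.
From Stdlib Require Import Reals Lra Psatz.
From Coquelicot Require Import Coquelicot.
Open Scope R_scope.

Lemma CkOn_S k f : CkOn (S k) f -> CkOn k f.
Proof.
  revert f; induction k as [|k IH]; intros f H.
  - simpl in H |- *. tauto.
  - destruct H as (H1 & H2 & H3 & H4). split; [exact H1|]. split; [exact H2|].
    split; apply IH; assumption.
Qed.

Lemma CkOn_le k M f : (k <= M)%nat -> CkOn M f -> CkOn k f.
Proof.
  intros Hk; induction Hk; intros H; auto. apply IHHk. now apply CkOn_S.
Qed.

Lemma open_loc x y : in_open2Sigma x y -> locally_2d in_open2Sigma x y.
Proof.
  intros [Hx Hy].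
  assert (Hd : 0 < Rmin (2 - Rabs x) (2 - Rabs y)).
  { apply Rmin_pos; unfold Rabs; destruct (Rcase_abs _); lra. }
  exists (mkposreal _ Hd). simpl. intros u v Hu Hv.
  pose proof (Rmin_l (2 - Rabs x) (2 - Rabs y)).
  pose proof (Rmin_r (2 - Rabs x) (2 - Rabs y)).
  apply Rabs_def2 in Hu. apply Rabs_def2 in Hv.
  pose proof (Rle_abs x). pose proof (Rle_abs (-x)). rewrite Rabs_Ropp in *.
  pose proof (Rle_abs y). pose proof (Rle_abs (-y)). rewrite Rabs_Ropp in *.
  unfold in_open2Sigma. lra.
Qed.

Lemma cont_of f x y : continuous (fun p : R * R => f (fst p) (snd p)) (x, y) ->
  continuity_2d_pt f x y.
Proof. intros H. apply (proj2 (continuity_2d_pt_filterlim f x y)). exact H. Qed.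

Lemma sym2 g x y : CkOn 2 g -> in_open2Sigma x y -> py (px g) x y = px (py g) x y.
Proof.
  intros Hg Hxy. unfold px, py.
  symmetry. apply Schwarz.
  - apply locally_2d_impl with (P := in_open2Sigma); [|now apply open_loc].
    apply locally_2d_forall. intros u v Huv.
    destruct Hg as (_ & Hd & (_ & Hdx & _) & (_ & Hdy & _)).
    destruct (Hd u v Huv). destruct (Hdx u v Huv). destruct (Hdy u v Huv).
    repeat split; assumption.
  - apply cont_of. destruct Hg as (_ & _ & _ & (_ & _ & H & _)). now apply H.
  - apply cont_of. destruct Hg as (_ & _ & (_ & _ & _ & H) & _). now apply H.
Qed.

Lemma E1 phi x y : CkOn 3 phi -> in_open2Sigma x y ->
  py (px phi) x y = px (py phi) x y.
Proof. intros H Hxy. apply sym2; [now apply CkOn_S|exact Hxy]. Qed.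

Lemma E2 phi x y : CkOn 3 phi -> in_open2Sigma x y ->
  py (px (px phi)) x y = px (px (py phi)) x y.
Proof.
  intros H Hxy. rewrite sym2; [| destruct H as (_&_&H&_); exact H | exact Hxy].
  unfold px at 1 3. apply Derive_ext_loc.
  apply (locally_2d_1d_const_y (fun u v => py (px phi) u v = px (py phi) u v)).
  apply locally_2d_impl with (P := in_open2Sigma); [|now apply open_loc].
  apply locally_2d_forall. intros u v Huv. now apply E1.
Qed.

Lemma E3 phi x y : CkOn 3 phi -> in_open2Sigma x y ->
  py (px (py phi)) x y = px (py (py phi)) x y.
Proof. intros H Hxy. apply sym2; [destruct H as (_&_&_&H); exact H|exact Hxy]. Qed.

Lemma mvt1 (f : R -> R) a b c e :
  (forall t, Rmin a b <= t <= Rmax a b -> ex_derive f t /\ Rabs (Derive f t - c) <= e) ->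
  Rabs (f b - f a - c * (b - a)) <= e * Rabs (b - a).
Proof.
  intros H.
  destruct (MVT_gen f a b (Derive f)) as (t & Ht & Heq).
  - intros x Hx. apply Derive_correct. apply H. lra.
  - intros x Hx. apply continuity_pt_filterlim. apply (ex_derive_continuous (K:=R_AbsRing) (V:=R_NormedModule) f). apply H. lra.
  - rewrite Heq. replace (Derive f t * (b - a) - c * (b - a)) with ((Derive f t - c) * (b - a)) by ring.
    rewrite Rabs_mult. apply Rmult_le_compat_r; [apply Rabs_pos|]. apply H. lra.
Qed.

Definition inSq x y := -1 <= x <= 1 /\ -1 <= y <= 1.

Lemma inSq_open x y : inSq x y -> in_open2Sigma x y.
Proof. unfold inSq, in_open2Sigma; lra. Qed.

Lemma minmax_sq a b t : -1 <= a <= 1 -> -1 <= b <= 1 -> Rmin a b <= t <= Rmax a b -> -1 <= t <= 1.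
Proof.
  intros. pose proof (Rmin_l a b). pose proof (Rmin_r a b).
  pose proof (Rmax_l a b). pose proof (Rmax_r a b).
  destruct (Rle_dec a b).
  - rewrite Rmin_left in * by lra. rewrite Rmax_right in * by lra. lra.
  - rewrite Rmin_right in * by lra. rewrite Rmax_left in * by lra. lra.
Qed.

Lemma lip2 g cx cy ex ey x1 y1 x2 y2 :
  (forall x y, inSq x y -> ex_derive (fun t => g t y) x /\ ex_derive (fun t => g x t) y /\
     Rabs (px g x y - cx) <= ex /\ Rabs (py g x y - cy) <= ey) ->
  inSq x1 y1 -> inSq x2 y2 ->
  Rabs (g x2 y2 - g x1 y1 - cx * (x2 - x1) - cy * (y2 - y1)) <= ex * Rabs (x2 - x1) + ey * Rabs (y2 - y1).
Proof.
  intros H [H1x H1y] [H2x H2y].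
  assert (A : Rabs (g x2 y1 - g x1 y1 - cx * (x2 - x1)) <= ex * Rabs (x2 - x1)).
  { apply (mvt1 (fun t => g t y1)). intros t Ht.
    assert (Ht' : inSq t y1) by (split; [eapply minmax_sq; [exact H1x|exact H2x|exact Ht]|exact H1y]).
    destruct (H t y1 Ht') as (Hd & _ & Hb & _). split; [exact Hd| exact Hb]. }
  assert (B : Rabs (g x2 y2 - g x2 y1 - cy * (y2 - y1)) <= ey * Rabs (y2 - y1)).
  { apply (mvt1 (fun t => g x2 t)). intros t Ht.
    assert (Ht' : inSq x2 t) by (split; [exact H2x|eapply minmax_sq; [exact H1y|exact H2y|exact Ht]]).
    destruct (H x2 t Ht') as (_ & Hd & _ & Hb). split; [exact Hd| exact Hb]. }
  replace (g x2 y2 - g x1 y1 - cx * (x2 - x1) - cy * (y2 - y1)) with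
    ((g x2 y1 - g x1 y1 - cx * (x2 - x1)) + (g x2 y2 - g x2 y1 - cy * (y2 - y1))) by ring.
  eapply Rle_trans; [apply Rabs_triang|]. lra.
Qed.

Definition eps := / 100000.

Section PhiBounds.
Variable M : nat.
Variable phi : R -> R -> R.
Hypothesis HM : (3 <= M)%nat.
Hypothesis HH : Hyp M phi.

Lemma C3 : CkOn 3 phi.
Proof. apply (CkOn_le 3 M); [exact HM| exact (proj1 HH)]. Qed.

Lemma third a b x y : (a + b = 3)%nat -> inSq x y -> Rabs (pd a b phi x y) <= eps.
Proof.
  intros Hab Hxy. destruct HH as (_&_&_&_&_&_&_&H). apply H; try lia.
  now apply inSq_open.
Qed.

Lemma dphi x y : inSq x y ->
 (ex_derive (fun t => px (px phi) t y) x /\ ex_derive (fun t => px (px phi) x t) y) /\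
 (ex_derive (fun t => px (py phi) t y) x /\ ex_derive (fun t => px (py phi) x t) y) /\
 (ex_derive (fun t => py (py phi) t y) x /\ ex_derive (fun t => py (py phi) x t) y) /\
 (ex_derive (fun t => px phi t y) x /\ ex_derive (fun t => px phi x t) y) /\
 (ex_derive (fun t => py phi t y) x /\ ex_derive (fun t => py phi x t) y).
Proof.
  intros Hxy. apply inSq_open in Hxy. pose proof C3 as H.
  destruct H as (_ & _ & Hx & Hy).
  destruct Hx as (_ & Hx1 & (_ & Hxx & _) & (_ & Hxy1 & _)).
  destruct Hy as (_ & Hy1 & (_ & Hyx & _) & (_ & Hyy & _)).
  destruct (Hxx x y Hxy), (Hyx x y Hxy), (Hyy x y Hxy), (Hx1 x y Hxy), (Hy1 x y Hxy).
  repeat split; assumption.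
Qed.

Lemma lipyy x1 y1 x2 y2 : inSq x1 y1 -> inSq x2 y2 ->
  Rabs (py (py phi) x2 y2 - py (py phi) x1 y1) <= eps * Rabs (x2 - x1) + eps * Rabs (y2 - y1).
Proof.
  intros H1 H2.
  pose proof (lip2 (py (py phi)) 0 0 eps eps x1 y1 x2 y2) as L.
  replace (py (py phi) x2 y2 - py (py phi) x1 y1) with
    (py (py phi) x2 y2 - py (py phi) x1 y1 - 0 * (x2 - x1) - 0 * (y2 - y1)) by ring.
  apply L; auto. intros x y Hxy. destruct (dphi x y Hxy) as (_&_&[Ha Hb]&_).
  repeat split; auto; rewrite Rminus_0_r.
  - exact (third 1 2 x y eq_refl Hxy).
  - exact (third 0 3 x y eq_refl Hxy).
Qed.

Lemma lipxy x1 y1 x2 y2 : inSq x1 y1 -> inSq x2 y2 ->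
  Rabs (px (py phi) x2 y2 - px (py phi) x1 y1) <= eps * Rabs (x2 - x1) + eps * Rabs (y2 - y1).
Proof.
  intros H1 H2.
  pose proof (lip2 (px (py phi)) 0 0 eps eps x1 y1 x2 y2) as L.
  replace (px (py phi) x2 y2 - px (py phi) x1 y1) with
    (px (py phi) x2 y2 - px (py phi) x1 y1 - 0 * (x2 - x1) - 0 * (y2 - y1)) by ring.
  apply L; auto. intros x y Hxy. destruct (dphi x y Hxy) as (_&[Ha Hb]&_).
  repeat split; auto; rewrite Rminus_0_r.
  - exact (third 2 1 x y eq_refl Hxy).
  - rewrite E3; [|exact C3|now apply inSq_open]. exact (third 1 2 x y eq_refl Hxy).
Qed.

Lemma lipxx x1 y1 x2 y2 : inSq x1 y1 -> inSq x2 y2 ->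
  Rabs (px (px phi) x2 y2 - px (px phi) x1 y1) <= eps * Rabs (x2 - x1) + eps * Rabs (y2 - y1).
Proof.
  intros H1 H2.
  pose proof (lip2 (px (px phi)) 0 0 eps eps x1 y1 x2 y2) as L.
  replace (px (px phi) x2 y2 - px (px phi) x1 y1) with
    (px (px phi) x2 y2 - px (px phi) x1 y1 - 0 * (x2 - x1) - 0 * (y2 - y1)) by ring.
  apply L; auto. intros x y Hxy. destruct (dphi x y Hxy) as ([Ha Hb]&_).
  repeat split; auto; rewrite Rminus_0_r.
  - exact (third 3 0 x y eq_refl Hxy).
  - rewrite E2; [|exact C3|now apply inSq_open]. exact (third 2 1 x y eq_refl Hxy).
Qed.

Lemma sq0 : inSq 0 0.
Proof. unfold inSq; lra. Qed.

Lemma absx_le x : -1 <= x <= 1 -> Rabs x <= 1.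
Proof. intros; apply Rabs_le; lra. Qed.

Lemma bxx x y : inSq x y -> Rabs (px (px phi) x y) <= 2 * eps.
Proof.
  intros H. pose proof (lipxx 0 0 x y sq0 H) as L.
  destruct HH as (_&_&_&_&H20&_). change (pd 2 0 phi 0 0) with (px (px phi) 0 0) in H20.
  rewrite H20, !Rminus_0_r in L. destruct H as [[] []].
  pose proof (absx_le x ltac:(lra)). pose proof (absx_le y ltac:(lra)). unfold eps in *. lra.
Qed.

Lemma byy x y : inSq x y -> Rabs (py (py phi) x y) <= 2 * eps.
Proof.
  intros H. pose proof (lipyy 0 0 x y sq0 H) as L.
  destruct HH as (_&_&_&_&_&_&H02&_). change (pd 0 2 phi 0 0) with (py (py phi) 0 0) in H02.
  rewrite H02, !Rminus_0_r in L. destruct H as [[] []].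
  pose proof (absx_le x ltac:(lra)). pose proof (absx_le y ltac:(lra)). unfold eps in *. lra.
Qed.

Lemma bxy x y : inSq x y -> Rabs (px (py phi) x y - 1) <= 2 * eps.
Proof.
  intros H. pose proof (lipxy 0 0 x y sq0 H) as L.
  destruct HH as (_&_&_&_&_&H11&_). change (pd 1 1 phi 0 0) with (px (py phi) 0 0) in H11.
  rewrite H11, !Rminus_0_r in L. destruct H as [[] []].
  pose proof (absx_le x ltac:(lra)). pose proof (absx_le y ltac:(lra)). unfold eps in *. lra.
Qed.

Lemma gradx x1 y1 x2 y2 : inSq x1 y1 -> inSq x2 y2 ->
  Rabs (px phi x2 y2 - px phi x1 y1 - (y2 - y1)) <= 2 * eps * Rabs (x2 - x1) + 2 * eps * Rabs (y2 - y1).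
Proof.
  intros H1 H2.
  pose proof (lip2 (px phi) 0 1 (2*eps) (2*eps) x1 y1 x2 y2) as L.
  replace (px phi x2 y2 - px phi x1 y1 - (y2 - y1)) with
    (px phi x2 y2 - px phi x1 y1 - 0 * (x2 - x1) - 1 * (y2 - y1)) by ring.
  apply L; auto. intros x y Hxy. destruct (dphi x y Hxy) as (_&_&_&[Ha Hb]&_).
  repeat split; auto.
  - rewrite Rminus_0_r. now apply bxx.
  - rewrite E1; [|exact C3|now apply inSq_open]. now apply bxy.
Qed.

Lemma grady x1 y1 x2 y2 : inSq x1 y1 -> inSq x2 y2 ->
  Rabs (py phi x2 y2 - py phi x1 y1 - (x2 - x1)) <= 2 * eps * Rabs (x2 - x1) + 2 * eps * Rabs (y2 - y1).
Proof.
  intros H1 H2.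
  pose proof (lip2 (py phi) 1 0 (2*eps) (2*eps) x1 y1 x2 y2) as L.
  replace (py phi x2 y2 - py phi x1 y1 - (x2 - x1)) with
    (py phi x2 y2 - py phi x1 y1 - 1 * (x2 - x1) - 0 * (y2 - y1)) by ring.
  apply L; auto. intros x y Hxy. destruct (dphi x y Hxy) as (_&_&_&_&[Ha Hb]).
  repeat split; auto.
  - now apply bxy.
  - rewrite Rminus_0_r. now apply byy.
Qed.

End PhiBounds.

Lemma rev4 A B C D : Rabs (A + B + C + D) >= Rabs A - Rabs B - Rabs C - Rabs D.
Proof.
  assert (Rabs A <= Rabs (A+B+C+D) + Rabs B + Rabs C + Rabs D).
  { replace A with ((A+B+C+D) + (-B) + (-C) + (-D)) at 1 by ring.
    pose proof (Rabs_triang ((A+B+C+D) + (-B) + (-C)) (-D)).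
    pose proof (Rabs_triang ((A+B+C+D) + (-B)) (-C)).
    pose proof (Rabs_triang (A+B+C+D) (-B)).
    rewrite !Rabs_Ropp in *. lra. }
  lra.
Qed.

Lemma abs3 a b c : Rabs (a*b*c) = Rabs a * Rabs b * Rabs c.
Proof. now rewrite !Rabs_mult. Qed.

Lemma det_lb p q r : Rabs p <= 2*eps -> Rabs (q-1) <= 2*eps -> Rabs r <= 2*eps ->
  99/100 <= q*q - p*r /\ q*q - p*r <= 101/100 /\ 99/100 <= Rabs (p*r - q*q).
Proof.
  unfold eps; intros Hp Hq Hr.
  apply Rabs_le_between in Hp, Hq, Hr.
  assert (Rabs (p*r) <= 4/100000/100000).
  { rewrite Rabs_mult.
    assert (Rabs p <= 2/100000) by (apply Rabs_le; lra).
    assert (Rabs r <= 2/100000) by (apply Rabs_le; lra).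
    pose proof (Rabs_pos p). pose proof (Rabs_pos r). nra. }
  apply Rabs_le_between in H.
  assert (99/100 <= q*q - p*r) by nra.
  assert (q*q - p*r <= 101/100) by nra.
  split; [lra|split; [lra|]].
  rewrite <- Rabs_Ropp. rewrite Rabs_right; lra.
Qed.

Lemma gbound p q r x1 x2 y1 y2 :
  Rabs p <= 2*eps -> Rabs (q-1) <= 2*eps -> Rabs r <= 2*eps ->
  Rabs (((r*x1 - q*x2)/(p*r-q*q))*y1 + ((-q*x1+p*x2)/(p*r-q*q))*y2)
   <= 11/10*((Rabs x1 + Rabs x2)*(Rabs y1 + Rabs y2)).
Proof.
  intros Hp Hq Hr. destruct (det_lb p q r Hp Hq Hr) as (_&_&Hd).
  assert (Hd0 : p*r - q*q <> 0) by (intro E; rewrite E, Rabs_R0 in Hd; lra).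
  replace (((r*x1 - q*x2)/(p*r-q*q))*y1 + ((-q*x1+p*x2)/(p*r-q*q))*y2) with
    ((r*x1*y1 + (-q)*x2*y1 + (-q)*x1*y2 + p*x2*y2)/(p*r-q*q)) by (field; exact Hd0).
  unfold Rdiv. rewrite Rabs_mult, Rabs_inv.
  set (c := 1 + 2*eps).
  assert (Hq' : Rabs (-q) <= c).
  { rewrite Rabs_Ropp. unfold c. apply Rabs_le_between in Hq. apply Rabs_le. unfold eps in *; lra. }
  assert (Hp' : Rabs p <= c) by (unfold c, eps in *; lra).
  assert (Hr' : Rabs r <= c) by (unfold c, eps in *; lra).
  assert (HN : Rabs (r*x1*y1 + (-q)*x2*y1 + (-q)*x1*y2 + p*x2*y2) <= c * ((Rabs x1 + Rabs x2)*(Rabs y1 + Rabs y2))).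
  { eapply Rle_trans. apply Rabs_triang. eapply Rle_trans. apply Rplus_le_compat_r. apply Rabs_triang.
    eapply Rle_trans. apply Rplus_le_compat_r. apply Rplus_le_compat_r. apply Rabs_triang.
    rewrite !abs3.
    pose proof (Rabs_pos x1). pose proof (Rabs_pos x2). pose proof (Rabs_pos y1). pose proof (Rabs_pos y2).
    assert (Rabs r * Rabs x1 * Rabs y1 <= c * Rabs x1 * Rabs y1) by (apply Rmult_le_compat_r; [lra|]; apply Rmult_le_compat_r; lra).
    assert (Rabs (-q) * Rabs x2 * Rabs y1 <= c * Rabs x2 * Rabs y1) by (apply Rmult_le_compat_r; [lra|]; apply Rmult_le_compat_r; lra).
    assert (Rabs (-q) * Rabs x1 * Rabs y2 <= c * Rabs x1 * Rabs y2) by (apply Rmult_le_compat_r; [lra|]; apply Rmult_le_compat_r; lra).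
    assert (Rabs p * Rabs x2 * Rabs y2 <= c * Rabs x2 * Rabs y2) by (apply Rmult_le_compat_r; [lra|]; apply Rmult_le_compat_r; lra).
    nra. }
  set (N := Rabs (r*x1*y1 + (-q)*x2*y1 + (-q)*x1*y2 + p*x2*y2)) in *.
  set (Z := (Rabs x1 + Rabs x2)*(Rabs y1 + Rabs y2)) in *.
  assert (0 <= Z) by (unfold Z; pose proof (Rabs_pos x1); pose proof (Rabs_pos x2); pose proof (Rabs_pos y1); pose proof (Rabs_pos y2); nra).
  assert (0 <= N) by apply Rabs_pos.
  set (dd := Rabs (p*r-q*q)) in *.
  assert (/ dd <= 100/99).
  { replace (100/99) with (/ (99/100)) by field. apply Rinv_le_contravar; lra. }
  assert (0 <= / dd) by (apply Rlt_le, Rinv_0_lt_compat; lra).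
  unfold c, eps in *. nra.
Qed.

Lemma gdiff p q r p' q' r' u1 u2 s : 0 < s ->
  Rabs p <= 2*eps -> Rabs (q-1) <= 2*eps -> Rabs r <= 2*eps ->
  Rabs p' <= 2*eps -> Rabs (q'-1) <= 2*eps -> Rabs r' <= 2*eps ->
  Rabs (p'-p) <= eps*s -> Rabs (q'-q) <= eps*s -> Rabs (r'-r) <= eps*s ->
  Rabs ((((r'*u1 - q'*u2)/(p'*r'-q'*q'))*u1 + ((-q'*u1+p'*u2)/(p'*r'-q'*q'))*u2)
      - (((r*u1 - q*u2)/(p*r-q*q))*u1 + ((-q*u1+p*u2)/(p*r-q*q))*u2))
   <= 10 * eps * s * (Rabs u1 + Rabs u2)^2.
Proof.
  intros Hs Hp Hq Hr Hp' Hq' Hr' Dp Dq Dr.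
  destruct (det_lb p q r Hp Hq Hr) as (_&_&Hd).
  destruct (det_lb p' q' r' Hp' Hq' Hr') as (_&_&Hd').
  assert (Hd0 : p*r - q*q <> 0) by (intro E; rewrite E, Rabs_R0 in Hd; lra).
  assert (Hd0' : p'*r' - q'*q' <> 0) by (intro E; rewrite E, Rabs_R0 in Hd'; lra).
  set (d := p*r - q*q) in *. set (d' := p'*r' - q'*q') in *.
  set (Q := r*(u1*u1) + (-2*q)*(u1*u2) + p*(u2*u2)).
  set (Q' := r'*(u1*u1) + (-2*q')*(u1*u2) + p'*(u2*u2)).
  replace ((((r'*u1 - q'*u2)/d')*u1 + ((-q'*u1+p'*u2)/d')*u2)
      - (((r*u1 - q*u2)/d)*u1 + ((-q*u1+p*u2)/d)*u2)) with
     ((Q' - Q) / d' + Q * (d - d') / (d * d')) by (unfold Q, Q'; field; split; assumption).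
  set (L := Rabs u1 + Rabs u2).
  pose proof (Rabs_pos u1). pose proof (Rabs_pos u2).
  assert (HL : 0 <= L) by (unfold L; lra).
  assert (E1 : Rabs (Q' - Q) <= eps * s * L^2).
  { replace (Q' - Q) with ((r'-r)*(u1*u1) + (-2*(q'-q))*(u1*u2) + (p'-p)*(u2*u2)) by (unfold Q, Q'; ring).
    eapply Rle_trans. apply Rabs_triang. eapply Rle_trans. apply Rplus_le_compat_r. apply Rabs_triang.
    rewrite !Rabs_mult. replace (Rabs (-2)) with 2 by (rewrite Rabs_left; lra).
    assert (0 <= Rabs u1 * Rabs u1) by nra. assert (0 <= Rabs u1 * Rabs u2) by nra.
    assert (0 <= Rabs u2 * Rabs u2) by nra.
    assert (Rabs (r'-r) * (Rabs u1 * Rabs u1) <= eps*s * (Rabs u1 * Rabs u1)) by (apply Rmult_le_compat_r; lra).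
    assert (Rabs (q'-q) * (Rabs u1 * Rabs u2) <= eps*s * (Rabs u1 * Rabs u2)) by (apply Rmult_le_compat_r; lra).
    assert (Rabs (p'-p) * (Rabs u2 * Rabs u2) <= eps*s * (Rabs u2 * Rabs u2)) by (apply Rmult_le_compat_r; lra).
    unfold L. nra. }
  assert (E2 : Rabs Q <= 101/100 * L^2).
  { unfold Q. eapply Rle_trans. apply Rabs_triang. eapply Rle_trans. apply Rplus_le_compat_r. apply Rabs_triang.
    rewrite !Rabs_mult. replace (Rabs (-2)) with 2 by (rewrite Rabs_left; lra).
    apply Rabs_le_between in Hq.
    assert (Rabs q <= 1 + 2*eps) by (apply Rabs_le; unfold eps in *; lra).
    assert (0 <= Rabs u1 * Rabs u1) by nra. assert (0 <= Rabs u1 * Rabs u2) by nra.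
    assert (0 <= Rabs u2 * Rabs u2) by nra.
    assert (Rabs r * (Rabs u1 * Rabs u1) <= (1+2*eps) * (Rabs u1 * Rabs u1)) by (apply Rmult_le_compat_r; unfold eps in *; lra).
    assert (Rabs q * (Rabs u1 * Rabs u2) <= (1+2*eps) * (Rabs u1 * Rabs u2)) by (apply Rmult_le_compat_r; lra).
    assert (Rabs p * (Rabs u2 * Rabs u2) <= (1+2*eps) * (Rabs u2 * Rabs u2)) by (apply Rmult_le_compat_r; unfold eps in *; lra).
    unfold L, eps in *. nra. }
  assert (E3 : Rabs (d - d') <= 3 * eps * s).
  { unfold d, d'. replace (p * r - q * q - (p' * r' - q' * q')) with (p*(r-r') + r'*(p-p') + (q'-q)*(q'+q)) by ring.
    eapply Rle_trans. apply Rabs_triang. eapply Rle_trans. apply Rplus_le_compat_r. apply Rabs_triang.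
    rewrite !Rabs_mult. rewrite <- (Rabs_Ropp (r - r')), <- (Rabs_Ropp (p - p')).
    replace (- (r - r')) with (r' - r) by ring. replace (- (p - p')) with (p' - p) by ring.
    apply Rabs_le_between in Hq, Hq'.
    assert (Rabs (q'+q) <= 2 + 4*eps) by (apply Rabs_le; lra).
    pose proof (Rabs_pos p). pose proof (Rabs_pos r'). pose proof (Rabs_pos (r'-r)). pose proof (Rabs_pos (p'-p)).
    pose proof (Rabs_pos (q'-q)). pose proof (Rabs_pos (q'+q)).
    assert (Rabs p * Rabs (r'-r) <= 2*eps*(eps*s)) by (apply Rmult_le_compat; lra).
    assert (Rabs r' * Rabs (p'-p) <= 2*eps*(eps*s)) by (apply Rmult_le_compat; lra).
    assert (Rabs (q'-q) * Rabs (q'+q) <= (eps*s)*(2+4*eps)) by (apply Rmult_le_compat; lra).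
    unfold eps in *. nra. }
  eapply Rle_trans. apply Rabs_triang.
  unfold Rdiv. rewrite !Rabs_mult, !Rabs_inv, Rabs_mult.
  set (D := Rabs d) in *. set (D' := Rabs d') in *.
  assert (ID : / D <= 100/99) by (replace (100/99) with (/ (99/100)) by field; apply Rinv_le_contravar; lra).
  assert (ID' : / D' <= 100/99) by (replace (100/99) with (/ (99/100)) by field; apply Rinv_le_contravar; lra).
  assert (0 <= / D) by (apply Rlt_le, Rinv_0_lt_compat; lra).
  assert (0 <= / D') by (apply Rlt_le, Rinv_0_lt_compat; lra).
  rewrite Rinv_mult.
  pose proof (Rabs_pos (Q'-Q)). pose proof (Rabs_pos Q). pose proof (Rabs_pos (d-d')).
  assert (A1 : Rabs (Q'-Q) * / D' <= eps*s*L^2 * (100/99)) by (apply Rmult_le_compat; lra).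
  assert (A2 : Rabs Q * Rabs (d - d') <= 101/100 * L^2 * (3*eps*s)) by (apply Rmult_le_compat; lra).
  assert (A3 : / D * / D' <= 100/99 * (100/99)) by (apply Rmult_le_compat; lra).
  assert (0 <= L^2) by nra.
  assert (0 <= eps) by (unfold eps; lra).
  assert (0 <= Rabs Q * Rabs (d - d')) by nra.
  assert (A4 : Rabs Q * Rabs (d - d') * (/ D * / D') <= 101/100 * L^2 * (3*eps*s) * (100/99 * (100/99))).
  { apply Rmult_le_compat; try lra. apply Rmult_le_pos; assumption. }
  assert (0 <= eps * s * L^2) by (apply Rmult_le_pos; [apply Rmult_le_pos|]; lra).
  nra.
Qed.

Lemma alg p q r p' q' r' u1 u2 a1 a2 b1 b2 s : 0 < s ->
  Rabs p <= 2*eps -> Rabs (q-1) <= 2*eps -> Rabs r <= 2*eps ->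
  Rabs p' <= 2*eps -> Rabs (q'-1) <= 2*eps -> Rabs r' <= 2*eps ->
  Rabs (p'-p) <= eps*s -> Rabs (q'-q) <= eps*s -> Rabs (r'-r) <= eps*s ->
  Rabs u1 <= 3 -> Rabs u2 <= 3 ->
  Rabs a1 <= 11/10*s -> Rabs a2 <= 11/10*s -> Rabs b1 <= 11/10*s -> Rabs b2 <= 11/10*s ->
  Rabs (u1 - p / (q + sqrt (q^2 - p*r)) * u2) >= 50*s ->
  Rabs (u2 - r / (q + sqrt (q^2 - p*r)) * u1) >= 50*s ->
  Rabs (((r' * (u1+a1) - q' * (u2+a2)) / (p'*r' - q'*q')) * (u1+b1)
      + ((- q' * (u1+a1) + p' * (u2+a2)) / (p'*r'-q'*q')) * (u2+b2)) >= 4 * s^2.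
Proof.
  intros Hs Hp Hq Hr Hp' Hq' Hr' Dp Dq Dr Hu1 Hu2 Ha1 Ha2 Hb1 Hb2 Ht1 Ht2.
  destruct (det_lb p q r Hp Hq Hr) as (H1&H2&Hd).
  set (S := sqrt (q^2 - p*r)) in *.
  assert (HS : S * S = q*q - p*r) by (unfold S; rewrite sqrt_sqrt; [ring|nra]).
  assert (HS0 : 0 <= S) by apply sqrt_pos.
  set (D := q + S) in *.
  assert (HD : 9/10 <= D) by (unfold D; apply Rabs_le_between in Hq; unfold eps in *; lra).
  set (T1 := u1 - p / D * u2) in *. set (T2 := u2 - r / D * u1) in *.
  set (G := fun x1 x2 y1 y2 => ((r' * x1 - q' * x2) / (p'*r' - q'*q')) * y1
      + ((- q' * x1 + p' * x2) / (p'*r'-q'*q')) * y2).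
  assert (Hd0' : p'*r' - q'*q' <> 0).
  { destruct (det_lb p' q' r' Hp' Hq' Hr') as (_&_&Hd'). intro E; rewrite E, Rabs_R0 in Hd'; lra. }
  change (Rabs (G (u1+a1) (u2+a2) (u1+b1) (u2+b2)) >= 4 * s^2).
  replace (G (u1+a1) (u2+a2) (u1+b1) (u2+b2)) with
    (G u1 u2 u1 u2 + G a1 a2 u1 u2 + G u1 u2 b1 b2 + G a1 a2 b1 b2)
    by (unfold G; field; exact Hd0').
  eapply Rge_trans; [apply rev4|].
  set (Q := ((r*u1 - q*u2)/(p*r-q*q))*u1 + ((-q*u1+p*u2)/(p*r-q*q))*u2).
  assert (HQ : Q = D * (T1 * T2) / (q*q - p*r)).
  { assert (E : D*D*(T1*T2) = (D*u1 - p*u2)*(D*u2 - r*u1)) by (unfold T1, T2; field; lra).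
    assert (E2 : (D*u1 - p*u2)*(D*u2 - r*u1) + D*((r*u1 - q*u2)*u1 + (-q*u1+p*u2)*u2) = (p*r - q*q + S*S)*u1*u2)
      by (unfold D; ring).
    rewrite HS in E2. replace (p * r - q * q + (q * q - p * r)) with 0 in E2 by ring.
    assert (E3 : D * (D * (T1 * T2)) = D * (- ((r*u1 - q*u2)*u1 + (-q*u1+p*u2)*u2))) by nra.
    apply Rmult_eq_reg_l in E3; [|lra].
    rewrite E3. unfold Q. field. split; lra. }
  set (X := Rabs T1) in *. set (Y := Rabs T2) in *.
  assert (HX : 0 <= X) by apply Rabs_pos. assert (HY : 0 <= Y) by apply Rabs_pos.
  assert (HQb : 8/10 * (X*Y) <= Rabs Q).
  { rewrite HQ. unfold Rdiv. rewrite !Rabs_mult, Rabs_inv.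
    rewrite (Rabs_right D) by lra. rewrite (Rabs_right (q*q - p*r)) by lra.
    fold X Y.
    assert (/ (q*q - p*r) >= 100/101).
    { replace (100/101) with (/(101/100)) by field. apply Rle_ge, Rinv_le_contravar; lra. }
    assert (0 <= X*Y) by nra.
    set (iH := / (q*q - p*r)) in *.
    assert (D * iH >= 8/10) by nra.
    replace (D * (X * Y) * iH) with ((D * iH) * (X*Y)) by ring. nra. }
  set (L := Rabs u1 + Rabs u2).
  pose proof (Rabs_pos u1). pose proof (Rabs_pos u2).
  assert (HLX : L <= 101/100 * (X + Y)).
  { assert (Bp : Rabs (p/D) <= 3*eps).
    { unfold Rdiv. rewrite Rabs_mult, Rabs_inv, (Rabs_right D) by lra.
      assert (/D <= 10/9) by (replace (10/9) with (/(9/10)) by field; apply Rinv_le_contravar; lra).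
      assert (0 <= /D) by (apply Rlt_le, Rinv_0_lt_compat; lra).
      pose proof (Rabs_pos p). unfold eps in *. nra. }
    assert (Br : Rabs (r/D) <= 3*eps).
    { unfold Rdiv. rewrite Rabs_mult, Rabs_inv, (Rabs_right D) by lra.
      assert (/D <= 10/9) by (replace (10/9) with (/(9/10)) by field; apply Rinv_le_contravar; lra).
      assert (0 <= /D) by (apply Rlt_le, Rinv_0_lt_compat; lra).
      pose proof (Rabs_pos r). unfold eps in *. nra. }
    assert (U1 : Rabs u1 <= X + 3*eps*Rabs u2).
    { replace u1 with (T1 + p/D*u2) at 1 by (unfold T1; ring).
      eapply Rle_trans. apply Rabs_triang. rewrite Rabs_mult.
      apply Rplus_le_compat_l. apply Rmult_le_compat_r; [apply Rabs_pos|exact Bp]. }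
    assert (U2 : Rabs u2 <= Y + 3*eps*Rabs u1).
    { replace u2 with (T2 + r/D*u1) at 1 by (unfold T2; ring).
      eapply Rle_trans. apply Rabs_triang. rewrite Rabs_mult.
      apply Rplus_le_compat_l. apply Rmult_le_compat_r; [apply Rabs_pos|exact Br]. }
    unfold L, eps in *. lra. }
  assert (HL6 : L <= 6) by (unfold L; lra).
  assert (HL0 : 0 <= L) by (unfold L; lra).
  pose proof (gdiff p q r p' q' r' u1 u2 s Hs Hp Hq Hr Hp' Hq' Hr' Dp Dq Dr) as GD.
  fold Q in GD. change (Rabs (G u1 u2 u1 u2 - Q) <= 10 * eps * s * L ^ 2) in GD.
  assert (GUU : Rabs (G u1 u2 u1 u2) >= Rabs Q - 10 * eps * s * L^2).
  { pose proof (Rabs_triang (Q - G u1 u2 u1 u2) (G u1 u2 u1 u2)) as Htr.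
    replace (Q - G u1 u2 u1 u2 + G u1 u2 u1 u2) with Q in Htr by ring.
    rewrite Rabs_minus_sym in Htr. lra. }
  assert (Ha : Rabs a1 + Rabs a2 <= 22/10*s) by lra.
  assert (Hb : Rabs b1 + Rabs b2 <= 22/10*s) by lra.
  assert (Ga : Rabs (G a1 a2 u1 u2) <= 11/10 * (22/10*s * L)).
  { eapply Rle_trans. apply gbound; assumption. apply Rmult_le_compat_l; [lra|].
    apply Rmult_le_compat_r; [lra|exact Ha]. }
  assert (Gb : Rabs (G u1 u2 b1 b2) <= 11/10 * (L * (22/10*s))).
  { eapply Rle_trans. apply gbound; assumption. apply Rmult_le_compat_l; [lra|].
    apply Rmult_le_compat_l; [lra|exact Hb]. }
  assert (Gab : Rabs (G a1 a2 b1 b2) <= 11/10 * ((22/10*s) * (22/10*s))).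
  { eapply Rle_trans. apply gbound; assumption. apply Rmult_le_compat_l; [lra|].
    pose proof (Rabs_pos a1). pose proof (Rabs_pos a2). pose proof (Rabs_pos b1). pose proof (Rabs_pos b2).
    apply Rmult_le_compat; lra. }
  assert (F1 : s * X <= X*Y/50) by (apply Rge_le in Ht2; nra).
  assert (F2 : s * Y <= X*Y/50) by (apply Rge_le in Ht1; nra).
  assert (F3 : s * s <= X*Y/2500) by (apply Rge_le in Ht1, Ht2; nra).
  assert (F4 : s * L <= 101/100 * (X*Y/25)) by nra.
  assert (F5 : s * L^2 <= 6 * (s * L)).
  { assert (0 <= s*L) by nra. replace (s * L^2) with ((s*L)*L) by ring. nra. }
  unfold eps in *. nra.
Qed.

Lemma gsmall M phi x1 y1 x2 y2 h : (3 <= M)%nat -> Hyp M phi -> inSq x1 y1 -> inSq x2 y2 ->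
  Rabs (x2 - x1) <= h -> Rabs (y2 - y1) <= h ->
  Rabs (px phi x2 y2 - px phi x1 y1) <= h + 4*eps*h /\
  Rabs (py phi x2 y2 - py phi x1 y1) <= h + 4*eps*h.
Proof.
  intros HM HH H1 H2 Hx Hy.
  pose proof (gradx M phi HM HH x1 y1 x2 y2 H1 H2) as Gx.
  pose proof (grady M phi HM HH x1 y1 x2 y2 H1 H2) as Gy.
  assert (0 <= eps) by (unfold eps; lra).
  split.
  - replace (px phi x2 y2 - px phi x1 y1) with ((px phi x2 y2 - px phi x1 y1 - (y2 - y1)) + (y2 - y1)) by ring.
    eapply Rle_trans. apply Rabs_triang. nra.
  - replace (py phi x2 y2 - py phi x1 y1) with ((py phi x2 y2 - py phi x1 y1 - (x2 - x1)) + (x2 - x1)) by ring.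
    eapply Rle_trans. apply Rabs_triang. nra.
Qed.

Lemma sq_diff x1 y1 x2 y2 : inSq x1 y1 -> inSq x2 y2 -> Rabs (x2 - x1) <= 2 /\ Rabs (y2 - y1) <= 2.
Proof. unfold inSq; intros; split; apply Rabs_le; lra. Qed.

Theorem mainTheorem9 (M : nat) (phi : R -> R -> R) (K mu : R)
  (z1c z2c : pt) :
  (3 <= M)%nat -> Hyp M phi -> 1 <= K -> 1 <= mu ->
  inSigma z1c -> inSigma z2c ->
  Rabs (t1 phi z2c z1c z2c) >= 50 * sqrt mu / K ->
  Rabs (t2 phi z2c z1c z2c) >= 50 * sqrt mu / K ->
  forall z1 z1' z z2 z2' : pt,
    inCap (sqrt mu / K) z1c z1 -> inCap (sqrt mu / K) z1c z1' ->
    inCap (sqrt mu / K) z2c z -> inCap (sqrt mu / K) z2c z2 ->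
    inCap (sqrt mu / K) z2c z2' ->
    Rabs (Gamma phi z z1 z2 z1' z2') >= 4 * mu / K ^ 2.
Proof.
  intros HM HH HK Hmu Hc1 Hc2 Ht1 Ht2 z1 z1' z z2 z2' C1 C1' Cz C2 C2'.
  assert (Hsm : 0 < sqrt mu) by (apply sqrt_lt_R0; lra).
  assert (Hs : 0 < sqrt mu / K) by (apply Rdiv_lt_0_compat; lra).
  replace (4 * mu / K ^ 2) with (4 * (sqrt mu / K) ^ 2)
    by (unfold Rdiv; rewrite Rpow_mult_distr, pow2_sqrt by lra; field; lra).
  replace (50 * sqrt mu / K) with (50 * (sqrt mu / K)) in Ht1, Ht2 by (field; lra).
  set (s := sqrt mu / K) in *.
  destruct C1 as (C1x & C1y & S1). destruct C1' as (C1'x & C1'y & S1').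
  destruct Cz as (Czx & Czy & Sz). destruct C2 as (C2x & C2y & S2). destruct C2' as (C2'x & C2'y & S2').
  change (inSq (fst z1) (snd z1)) in S1. change (inSq (fst z1') (snd z1')) in S1'.
  change (inSq (fst z) (snd z)) in Sz. change (inSq (fst z2) (snd z2)) in S2.
  change (inSq (fst z2') (snd z2')) in S2'. change (inSq (fst z1c) (snd z1c)) in Hc1.
  change (inSq (fst z2c) (snd z2c)) in Hc2.
  assert (He : 0 <= eps) by (unfold eps; lra).
  assert (Hh : 0 <= s/2) by lra.
  set (u1 := phx phi z2c - phx phi z1c). set (u2 := phy phi z2c - phy phi z1c).
  pose proof (alg (phxx phi z2c) (phxy phi z2c) (phyy phi z2c) (phxx phi z) (phxy phi z) (phyy phi z)
    u1 u2 (phx phi z2 - phx phi z1 - u1) (phy phi z2 - phy phi z1 - u2)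
    (phx phi z2' - phx phi z1' - u1) (phy phi z2' - phy phi z1' - u2) s Hs) as KEY.
  assert (Gq : Gamma phi z z1 z2 z1' z2' =
    ((phyy phi z * (u1 + (phx phi z2 - phx phi z1 - u1)) - phxy phi z * (u2 + (phy phi z2 - phy phi z1 - u2))) /
     (phxx phi z * phyy phi z - phxy phi z * phxy phi z)) * (u1 + (phx phi z2' - phx phi z1' - u1)) +
    ((- phxy phi z * (u1 + (phx phi z2 - phx phi z1 - u1)) + phxx phi z * (u2 + (phy phi z2 - phy phi z1 - u2))) /
     (phxx phi z * phyy phi z - phxy phi z * phxy phi z)) * (u2 + (phy phi z2' - phy phi z1' - u2))).
  { unfold Gamma. cbv zeta. clearbody u1 u2. replace (u1 + (phx phi z2 - phx phi z1 - u1)) with (phx phi z2 - phx phi z1) by ring. replace (u2 + (phy phi z2 - phy phi z1 - u2)) with (phy phi z2 - phy phi z1) by ring. replace (u1 + (phx phi z2' - phx phi z1' - u1)) with (phx phi z2' - phx phi z1') by ring. replace (u2 + (phy phi z2' - phy phi z1' - u2)) with (phy phi z2' - phy phi z1') by ring. reflexivity. }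
  rewrite Gq. apply KEY.
  - exact (bxx M phi HM HH _ _ Hc2).
  - exact (bxy M phi HM HH _ _ Hc2).
  - exact (byy M phi HM HH _ _ Hc2).
  - exact (bxx M phi HM HH _ _ Sz).
  - exact (bxy M phi HM HH _ _ Sz).
  - exact (byy M phi HM HH _ _ Sz).
  - pose proof (lipxx M phi HM HH _ _ _ _ Hc2 Sz). unfold phxx, pd; simpl. nra.
  - pose proof (lipxy M phi HM HH _ _ _ _ Hc2 Sz). unfold phxy, pd; simpl. nra.
  - pose proof (lipyy M phi HM HH _ _ _ _ Hc2 Sz). unfold phyy, pd; simpl. nra.
  - destruct (sq_diff _ _ _ _ Hc1 Hc2).
    destruct (gsmall M phi _ _ _ _ 2 HM HH Hc1 Hc2) as [G1 _]; try assumption.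
    unfold u1, phx, pd; simpl. unfold eps in *; lra.
  - destruct (sq_diff _ _ _ _ Hc1 Hc2).
    destruct (gsmall M phi _ _ _ _ 2 HM HH Hc1 Hc2) as [_ G1]; try assumption.
    unfold u2, phy, pd; simpl. unfold eps in *; lra.
  - destruct (gsmall M phi _ _ _ _ (s/2) HM HH Hc2 S2) as [G1 _]; try assumption.
    destruct (gsmall M phi _ _ _ _ (s/2) HM HH Hc1 S1) as [G2 _]; try assumption.
    unfold u1, phx, pd; simpl.
    replace (px phi (fst z2) (snd z2) - px phi (fst z1) (snd z1) - (px phi (fst z2c) (snd z2c) - px phi (fst z1c) (snd z1c)))
      with ((px phi (fst z2) (snd z2) - px phi (fst z2c) (snd z2c)) - (px phi (fst z1) (snd z1) - px phi (fst z1c) (snd z1c))) by ring.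
    eapply Rle_trans. apply Rabs_triang_inv2' || apply Rabs_triang. rewrite Rabs_Ropp. unfold eps in *; nra.
  - destruct (gsmall M phi _ _ _ _ (s/2) HM HH Hc2 S2) as [_ G1]; try assumption.
    destruct (gsmall M phi _ _ _ _ (s/2) HM HH Hc1 S1) as [_ G2]; try assumption.
    unfold u2, phy, pd; simpl.
    match goal with |- Rabs (?a - ?b - (?c - ?d)) <= _ =>
      replace (a - b - (c - d)) with ((a - c) - (b - d)) by ring end.
    eapply Rle_trans. apply Rabs_triang. rewrite Rabs_Ropp. unfold eps in *; nra.
  - destruct (gsmall M phi _ _ _ _ (s/2) HM HH Hc2 S2') as [G1 _]; try assumption.
    destruct (gsmall M phi _ _ _ _ (s/2) HM HH Hc1 S1') as [G2 _]; try assumption.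
    unfold u1, phx, pd; simpl.
    match goal with |- Rabs (?a - ?b - (?c - ?d)) <= _ =>
      replace (a - b - (c - d)) with ((a - c) - (b - d)) by ring end.
    eapply Rle_trans. apply Rabs_triang. rewrite Rabs_Ropp. unfold eps in *; nra.
  - destruct (gsmall M phi _ _ _ _ (s/2) HM HH Hc2 S2') as [_ G1]; try assumption.
    destruct (gsmall M phi _ _ _ _ (s/2) HM HH Hc1 S1') as [_ G2]; try assumption.
    unfold u2, phy, pd; simpl.
    match goal with |- Rabs (?a - ?b - (?c - ?d)) <= _ =>
      replace (a - b - (c - d)) with ((a - c) - (b - d)) by ring end.
    eapply Rle_trans. apply Rabs_triang. rewrite Rabs_Ropp. unfold eps in *; nra.
  - unfold t1, Bq, Hq in Ht1. exact Ht1.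
  - unfold t2, Aq, Hq in Ht2. exact Ht2.
Qed.
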